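(* Let $q\in\,]0,1[$, $\omega\ge 0$, and let $I$ be an interval containing $\omega_0:=\omega/(1-q)$. Let $\alpha,\beta\in\mathbb{R}$ and let $f,g:I\to\mathbb{R}$ be Hahn symmetric differentiable on $I$. Then for every $t\in I^{q,\omega}$: 1. $\tilde D_{q,\omega}[\alpha f+\beta g](t)=\alpha\tilde D_{q,\omega}[f](t)+\beta\tilde D_{q,\omega}[g](t)$; 2. $\tilde D_{q,\omega}[fg](t)=\tilde D_{q,\omega}[f](t)\,g(\sigma(t))+f(\sigma^{-1}(t))\,\tilde D_{q,\omega}[g](t)$; 3. if $g(\sigma(t))\,g(\sigma^{-1}(t))\neq 0$, then $\tilde D_{q,\omega}[f/g](t)=\dfrac{\tilde D_{q,\omega}[f](t)\,g(\sigma^{-1}(t))-f(\sigma^{-1}(t))\,\tilde D_{q,\omega}[g](t)}{g(\sigma(t))\,g(\sigma^{-1}(t))}$; 4. $\tilde D_{q,\omega}[f]\equiv 0$ (on $I^{q,\omega}$) if and only if $f$ is constant on $I$.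
   Context: $\sigma(t):=qt+\omega$, $\sigma^{-1}(t):=q^{-1}(t-\omega)$, and $I^{q,\omega}:=\{qt+\omega:t\in I\}\subseteq I$. The Hahn symmetric derivative of $f:I\to\mathbb{R}$ is defined, for $t\in I^{q,\omega}\setminus\{\omega_0\}$, by $$\tilde D_{q,\omega}[f](t):=\frac{f(qt+\omega)-f(q^{-1}(t-\omega))}{(q-q^{-1})t+(1+q^{-1})\omega}=\frac{f(\sigma(t))-f(\sigma^{-1}(t))}{\sigma(t)-\sigma^{-1}(t)},$$ and $\tilde D_{q,\omega}[f](\omega_0):=f'(\omega_0)$ (classical derivative), provided $f$ is differentiable at $\omega_0$ in the classical sense. ''Hahn symmetric differentiable on $I$'' means that $\tilde D_{q,\omega}[f](t)$ is defined for all $t\in I^{q,\omega}$, i.e. in particular $f$ is classically differentiable at $\omega_0$. *)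

(* Defs.v *)
From Stdlib Require Import Reals Lra ClassicalEpsilon.
Open Scope R_scope.

Definition hsigma (q w t : R) : R := q * t + w.
Definition hsigma_inv (q w t : R) : R := / q * (t - w).

Definition omega0 (q w : R) : R := w / (1 - q).

Definition is_interval (I : R -> Prop) : Prop :=
  forall x y z, I x -> I z -> x <= y <= z -> I y.

Definition Iqw (q w : R) (I : R -> Prop) (t : R) : Prop :=
  exists s, I s /\ t = q * s + w.

(* classical derivative of f : I -> R at x (relative to I; one-sided if x is
   an endpoint of I), equal to l *)
Definition deriv_within (I : R -> Prop) (f : R -> R) (x l : R) : Prop :=
  forall eps, 0 < eps -> exists delta, 0 < delta /\
    forall y, I y -> y <> x -> Rabs (y - x) < delta ->
      Rabs ((f y - f x) / (y - x) - l) < eps.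

(* the value f'(x) (meaningful when f is differentiable at x) *)
Definition classical_deriv (I : R -> Prop) (f : R -> R) (x : R) : R :=
  epsilon (inhabits 0) (fun l => deriv_within I f x l).

Definition hahn_sym_D (q w : R) (I : R -> Prop) (f : R -> R) (t : R) : R :=
  if Req_EM_T t (omega0 q w) then classical_deriv I f t
  else (f (hsigma q w t) - f (hsigma_inv q w t)) / (hsigma q w t - hsigma_inv q w t).

(* f is Hahn symmetric differentiable on I: tilde D f(t) defined for all
   t in I^{q,omega}, i.e. f is classically differentiable at omega_0 *)
Definition hahn_sym_differentiable (q w : R) (I : R -> Prop) (f : R -> R) : Prop :=
  exists l, deriv_within I f (omega0 q w) l.

(* Main.v *)
Require Import Defs.
From Stdlib Require Import Reals Lra ClassicalEpsilon.
Open Scope R_scope.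

Definition Dn (I : R -> Prop) (x : R) := fun y => I y /\ y <> x.
Definition Qf (f : R -> R) (x : R) := fun y => (f y - f x) / (y - x).

Lemma deriv_lim I f x l :
  deriv_within I f x l <-> limit1_in (Qf f x) (Dn I x) l x.
Proof.
  unfold deriv_within, limit1_in, limit_in, Dn, Qf; simpl; unfold Rdist; split.
  - intros H eps He. destruct (H eps He) as [d [Hd H']]. exists d; split; [lra|].
    intros y [[Hy Hyx] Hl]. apply H'; auto.
  - intros H eps He. destruct (H eps He) as [d [Hd H']]. exists d; split; [lra|].
    intros y Hy Hyx Hl. apply H'; auto.
Qed.

Lemma lim_ext f g D l x :
  (forall y, D y -> f y = g y) -> limit1_in f D l x -> limit1_in g D l x.
Proof.
  unfold limit1_in, limit_in; simpl; intros He H eps Heps.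
  destruct (H eps Heps) as [d [Hd H']]. exists d; split; auto.
  intros y [Dy Hy]. rewrite <- He; auto.
Qed.

Lemma lim_ext_near f g D l x d :
  0 < d ->
  (forall y, D y -> Rabs (y - x) < d -> f y = g y) -> limit1_in f D l x -> limit1_in g D l x.
Proof.
  unfold limit1_in, limit_in; simpl; unfold Rdist; intros Hd0 He H eps Heps.
  destruct (H eps Heps) as [d' [Hd H']]. exists (Rmin d d'); split.
  { apply Rmin_glb_lt; lra. }
  intros y [Dy Hy]. rewrite <- He; auto.
  - apply H'; split; auto. apply Rlt_le_trans with (1 := Hy); apply Rmin_r.
  - apply Rlt_le_trans with (1 := Hy); apply Rmin_l.
Qed.

Lemma adh I x :
  is_interval I -> (exists a b, I a /\ I b /\ a < b) -> I x -> adhDa (Dn I x) x.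
Proof.
  intros HI [a0 [b0 [Ha0 [Hb0 Hab]]]] Hx.
  assert (Ha : exists a, I a /\ a <> x).
  { destruct (Req_dec a0 x) as [->|]; [exists b0; split; auto; lra | exists a0; auto]. }
  destruct Ha as [a [Ha Hax]].
  intros alp Halp. unfold Dn, Rdist.
  assert (Hpos : 0 < Rabs (a - x)) by (apply Rabs_pos_lt; lra).
  set (k := Rmin 1 (alp / (2 * Rabs (a - x)))).
  assert (Hk0 : 0 < k). { apply Rmin_glb_lt; [lra|]. apply Rdiv_lt_0_compat; lra. }
  assert (Hk1 : k <= 1) by apply Rmin_l.
  assert (Hk2 : k <= alp / (2 * Rabs (a - x))) by apply Rmin_r.
  exists (x + k * (a - x)). split; [split|].
  - destruct (Rlt_le_dec x a).
    + apply (HI x _ a); auto. split; nra.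
    + apply (HI a _ x); auto. split; nra.
  - intro E. assert (k * (a - x) = 0) by lra. apply Rmult_integral in H; lra.
  - replace (x + k * (a - x) - x) with (k * (a - x)) by ring.
    rewrite Rabs_mult, (Rabs_right k) by lra.
    apply Rle_lt_trans with (alp / (2 * Rabs (a - x)) * Rabs (a - x)).
    + apply Rmult_le_compat_r; [apply Rabs_pos | auto].
    + field_simplify; lra.
Qed.

Lemma deriv_unique I f x l1 l2 :
  is_interval I -> (exists a b, I a /\ I b /\ a < b) -> I x ->
  deriv_within I f x l1 -> deriv_within I f x l2 -> l1 = l2.
Proof.
  intros HI Hab Hx H1 H2. apply deriv_lim in H1; apply deriv_lim in H2.
  exact (single_limit _ _ _ _ _ (adh I x HI Hab Hx) H1 H2).
Qed.

Lemma cd_eq I f x l :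
  is_interval I -> (exists a b, I a /\ I b /\ a < b) -> I x ->
  deriv_within I f x l -> classical_deriv I f x = l.
Proof.
  intros HI Hab Hx Hd. unfold classical_deriv.
  pose proof (epsilon_spec (inhabits 0) (fun l => deriv_within I f x l) (ex_intro _ l Hd)) as Hs.
  exact (deriv_unique I f x _ _ HI Hab Hx Hs Hd).
Qed.

Lemma cont I f x l : deriv_within I f x l -> limit1_in f (Dn I x) (f x) x.
Proof.
  intro Hd. apply deriv_lim in Hd.
  assert (Hm : limit1_in (fun y => Qf f x y * (y - x)) (Dn I x) (l * (x - x)) x).
  { apply (limit_mul (Qf f x) (fun y => y - x)); auto.
    apply (limit_minus (fun y => y) (fun _ => x)); [apply lim_x | apply (limit_free (fun _ => x) _ x x)]. }
  pose proof (limit_plus _ _ _ _ _ _ (limit_free (fun _ => f x) (Dn I x) x x) Hm) as Hp.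
  replace (f x + l * (x - x)) with (f x) in Hp by ring.
  refine (lim_ext _ _ _ _ _ _ Hp).
  intros y [Hy Hyx]. unfold Qf. field. lra.
Qed.

Lemma deriv_lin I f g x lf lg a b :
  deriv_within I f x lf -> deriv_within I g x lg ->
  deriv_within I (fun y => a * f y + b * g y) x (a * lf + b * lg).
Proof.
  intros Hf Hg. apply deriv_lim in Hf; apply deriv_lim in Hg. apply deriv_lim.
  pose proof (limit_plus _ _ _ _ _ _
    (limit_mul (fun _ => a) _ _ _ _ _ (limit_free (fun _ => a) _ x x) Hf)
    (limit_mul (fun _ => b) _ _ _ _ _ (limit_free (fun _ => b) _ x x) Hg)) as Hp.
  refine (lim_ext _ _ _ _ _ _ Hp). intros y [Hy Hyx]. unfold Qf. field. lra.
Qed.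

Lemma deriv_mul I f g x lf lg :
  deriv_within I f x lf -> deriv_within I g x lg ->
  deriv_within I (fun y => f y * g y) x (lf * g x + f x * lg).
Proof.
  intros Hf Hg. pose proof (cont _ _ _ _ Hg) as Cg.
  apply deriv_lim in Hf; apply deriv_lim in Hg. apply deriv_lim.
  pose proof (limit_plus _ _ _ _ _ _
    (limit_mul _ _ _ _ _ _ Hf Cg)
    (limit_mul (fun _ => f x) _ _ _ _ _ (limit_free (fun _ => f x) _ x x) Hg)) as Hp.
  refine (lim_ext _ _ _ _ _ _ Hp). intros y [Hy Hyx]. unfold Qf. field. lra.
Qed.

Lemma deriv_div I f g x lf lg :
  deriv_within I f x lf -> deriv_within I g x lg -> g x <> 0 ->
  deriv_within I (fun y => f y / g y) x ((lf * g x - f x * lg) / (g x * g x)).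
Proof.
  intros Hf Hg Hgx. pose proof (cont _ _ _ _ Hg) as Cg.
  assert (Hnear : exists d, 0 < d /\ forall y, Dn I x y -> Rabs (y - x) < d -> g y <> 0).
  { pose proof Cg as C. unfold limit1_in, limit_in in C; simpl in C; unfold Rdist in C.
    destruct (C (Rabs (g x))) as [d [Hd H]]. { apply Rabs_pos_lt; auto. }
    exists d; split; [lra|]. intros y Dy Hy E. specialize (H y (conj Dy Hy)).
    rewrite E in H. replace (0 - g x) with (- g x) in H by ring. rewrite Rabs_Ropp in H; lra. }
  destruct Hnear as [d [Hd Hn]].
  apply deriv_lim in Hf; apply deriv_lim in Hg. apply deriv_lim.
  pose proof (limit_mul _ _ _ _ _ _
    (limit_minus _ _ _ _ _ _
      (limit_mul _ (fun _ => g x) _ _ _ _ Hf (limit_free (fun _ => g x) _ x x))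
      (limit_mul (fun _ => f x) _ _ _ _ _ (limit_free (fun _ => f x) _ x x) Hg))
    (limit_inv _ _ _ _ (limit_mul _ (fun _ => g x) _ _ _ _ Cg (limit_free (fun _ => g x) _ x x))
       ltac:(apply Rmult_integral_contrapositive_currified; auto))) as Hp.
  refine (lim_ext_near _ _ _ _ _ d Hd _ Hp). intros y Dy Hy.
  pose proof (Hn y Dy Hy). destruct Dy as [_ Hyx]. unfold Qf. field. split; [lra|]. split; auto.
  lra.
Qed.

Lemma hs_fix q w : 0 < q < 1 -> hsigma q w (omega0 q w) = omega0 q w.
Proof. intros. unfold hsigma, omega0. field. lra. Qed.
Lemma hsi_fix q w : 0 < q < 1 -> hsigma_inv q w (omega0 q w) = omega0 q w.
Proof. intros. unfold hsigma_inv, omega0. field. lra. Qed.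

Lemma hs_den q w t : 0 < q < 1 -> t <> omega0 q w -> hsigma q w t - hsigma_inv q w t <> 0.
Proof.
  intros Hq Ht. replace (hsigma q w t - hsigma_inv q w t) with ((q - / q) * (t - omega0 q w)).
  2:{ unfold hsigma, hsigma_inv, omega0. field. lra. }
  apply Rmult_integral_contrapositive_currified; [|lra].
  assert (1 < / q). { rewrite <- Rinv_1. apply Rinv_lt_contravar; lra. } lra.
Qed.

Lemma contract q w I s : 0 < q < 1 -> is_interval I -> I (omega0 q w) -> I s -> I (q * s + w).
Proof.
  intros Hq HI Ho Hs.
  assert (E : q * s + w - omega0 q w = q * (s - omega0 q w)) by (unfold omega0; field; lra).
  destruct (Rle_dec s (omega0 q w)).
  - apply (HI s _ (omega0 q w)); auto. split; nra.
  - apply (HI (omega0 q w) _ s); auto. split; nra.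
Qed.

Theorem theorem2p8 (q w : R) (I : R -> Prop) (alpha beta : R) (f g : R -> R) :
  0 < q < 1 -> 0 <= w ->
  is_interval I -> (exists x y, I x /\ I y /\ x < y) ->
  I (omega0 q w) ->
  hahn_sym_differentiable q w I f ->
  hahn_sym_differentiable q w I g ->
  (forall t, Iqw q w I t ->
     hahn_sym_D q w I (fun x => alpha * f x + beta * g x) t
     = alpha * hahn_sym_D q w I f t + beta * hahn_sym_D q w I g t) /\
  (forall t, Iqw q w I t ->
     hahn_sym_D q w I (fun x => f x * g x) t
     = hahn_sym_D q w I f t * g (hsigma q w t)
       + f (hsigma_inv q w t) * hahn_sym_D q w I g t) /\
  (forall t, Iqw q w I t ->
     g (hsigma q w t) * g (hsigma_inv q w t) <> 0 ->
     hahn_sym_D q w I (fun x => f x / g x) t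
     = (hahn_sym_D q w I f t * g (hsigma_inv q w t)
        - f (hsigma_inv q w t) * hahn_sym_D q w I g t)
       / (g (hsigma q w t) * g (hsigma_inv q w t))) /\
  ((forall t, Iqw q w I t -> hahn_sym_D q w I f t = 0) <->
   (exists c, forall x, I x -> f x = c)).
Proof.
  intros Hq Hw HI Hab Ho [lf Hf] [lg Hg].
  assert (CDf := cd_eq I f _ _ HI Hab Ho Hf).
  assert (CDg := cd_eq I g _ _ HI Hab Ho Hg).
  split; [|split; [|split]].
  - intros t _. unfold hahn_sym_D. destruct (Req_EM_T t (omega0 q w)) as [->|Ht].
    + rewrite CDf, CDg. apply cd_eq; auto. apply deriv_lin; auto.
    + pose proof (hs_den q w t Hq Ht). field; auto.
  - intros t _. unfold hahn_sym_D. destruct (Req_EM_T t (omega0 q w)) as [->|Ht].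
    + rewrite CDf, CDg, hs_fix, hsi_fix by auto. apply cd_eq; auto. apply deriv_mul; auto.
    + pose proof (hs_den q w t Hq Ht). field; auto.
  - intros t _ Hgg. unfold hahn_sym_D. destruct (Req_EM_T t (omega0 q w)) as [->|Ht].
    + rewrite hs_fix, hsi_fix in * by auto. rewrite CDf, CDg. apply cd_eq; auto.
      apply deriv_div; auto. intro E; apply Hgg; rewrite E; ring.
    + pose proof (hs_den q w t Hq Ht).
      assert (g (hsigma q w t) <> 0) by (intro E; apply Hgg; rewrite E; ring).
      assert (g (hsigma_inv q w t) <> 0) by (intro E; apply Hgg; rewrite E; ring).
      field; auto.
  - split.
    + intros H. exists (f (omega0 q w)). intros x Hx.
      destruct (Req_dec x (omega0 q w)) as [->|Hxo]; auto.
      set (o := omega0 q w).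
      set (y := fun n : nat => o + (q ^ 2) ^ n * (x - o)).
      assert (Hstep : forall z, I z -> z <> o -> f (q * (q * z + w) + w) = f z).
      { intros z Hz Hzo.
        assert (Hit : Iqw q w I (q * z + w)) by (exists z; auto).
        assert (Hto : q * z + w <> o).
        { intro E. apply Hzo. assert (Ho2: o = q*o + w) by (unfold o, omega0; field; lra).
          assert (q * (z - o) = 0) by nra.
          apply Rmult_integral in H0; lra. }
        specialize (H _ Hit). unfold hahn_sym_D in H.
        destruct (Req_EM_T (q * z + w) (omega0 q w)); [contradiction|].
        pose proof (hs_den q w _ Hq Hto) as Hd.
        unfold Rdiv in H. apply Rmult_integral in H. destruct H as [H|H].
        - unfold hsigma, hsigma_inv in H.
          replace (/ q * (q * z + w - w)) with z in H by (field; lra). apply Rminus_diag_uniq; exact H.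
        - exfalso. apply Rinv_neq_0_compat in Hd; contradiction. }
      assert (Hy : forall n, I (y n) /\ y n <> o /\ f (y n) = f x).
      { induction n as [|n IH].
        - unfold y; simpl. split; [|split]; [replace (o + 1 * (x - o)) with x by ring; auto | intro; apply Hxo; unfold o in *; lra | f_equal; ring].
        - destruct IH as [IH1 [IH2 IH3]].
          assert (E : y (S n) = q * (q * y n + w) + w).
          { unfold y, o, omega0; simpl. field. lra. }
          rewrite E. split; [|split].
          + apply contract; auto. apply contract; auto.
          + rewrite <- E. unfold y. intro E2.
            assert ((q ^ 2) ^ S n * (x - o) = 0) by lra.
            apply Rmult_integral in H0. destruct H0; [|exfalso; apply Hxo; unfold o in *; lra].
            apply (pow_nonzero (q^2) (S n)); auto. apply pow_nonzero; lra.
          + rewrite Hstep; auto. }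
      pose proof (cont _ _ _ _ Hf) as C.
      destruct (Req_dec (f x) (f o)) as [|Hne]; auto. exfalso.
      unfold limit1_in, limit_in in C; simpl in C; unfold Rdist in C.
      destruct (C (Rabs (f x - f o))) as [d [Hd Hc]]. { apply Rabs_pos_lt; lra. }
      assert (Hxo' : 0 < Rabs (x - o)) by (apply Rabs_pos_lt; intro; apply Hxo; unfold o in *; lra).
      destruct (pow_lt_1_zero (q ^ 2) ltac:(rewrite Rabs_right; nra) (d / Rabs (x - o))
        ltac:(apply Rdiv_lt_0_compat; lra)) as [N HN].
      specialize (HN N (le_n N)).
      destruct (Hy N) as [Hy1 [Hy2 Hy3]].
      specialize (Hc (y N)). rewrite Hy3 in Hc. apply (Rlt_irrefl (Rabs (f x - f o))). apply Hc.
      split; [split; auto|]. unfold y. change (omega0 q w) with o; replace (o + (q ^ 2) ^ N * (x - o) - o) with ((q ^ 2) ^ N * (x - o)) by ring.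
      rewrite Rabs_mult.
      apply Rlt_le_trans with (d / Rabs (x - o) * Rabs (x - o)).
      * apply Rmult_lt_compat_r; auto.
      * right. field. lra.
    + intros [c Hc] t [s [Hs ->]]. unfold hahn_sym_D.
      destruct (Req_EM_T (q * s + w) (omega0 q w)) as [E|Ht].
      * rewrite E. apply cd_eq; auto. intros eps He. exists 1; split; [lra|].
        intros y Hy Hyo _. rewrite !Hc; auto. unfold Rdiv. rewrite Rminus_diag, Rmult_0_l, Rminus_0_r, Rabs_R0. lra.
      * unfold hsigma, hsigma_inv. replace (/ q * (q * s + w - w)) with s by (field; lra).
        rewrite !Hc; auto.
        -- unfold Rdiv; ring.
        -- apply contract; auto. apply contract; auto.
Qed.
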